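(* Let $t\ge 2$ be an even integer, let $p\ge 3$ be a prime with $p\equiv 1\pmod{t-1}$, and let $n_t=\frac{p(p-1)}{2(t-1)}$. Then $$ex(n_t,n_t,n_t,K_{2,t})\ge \frac{3p(p-1)^2}{4(t-1)}.$$
   Context: $K_{2,t}$ denotes the complete bipartite graph with parts of sizes $2$ and $t$. For an integer $n\ge1$, $ex(n,n,n,K_{2,t})$ is the maximum number of edges in a tripartite graph with three vertex classes each of size $n$ (edges only between different classes) that contains no subgraph isomorphic to $K_{2,t}$. *)

(* Defs.v *)
From mathcomp Require Import all_boot all_order.
Set Implicit Arguments. Unset Strict Implicit. Unset Printing Implicit Defensive.

(* Vertices of the tripartite host: class in 'I_3, index in 'I_n. *)
Definition tvert (n : nat) := ('I_3 * 'I_n)%type.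

(* A tripartite graph with classes of size n: an irreflexive symmetric
   adjacency (given as a set of ordered pairs), edges only between
   different classes. *)
Definition tripartite (n : nat) (E : {set tvert n * tvert n}) : bool :=
  [forall u : tvert n, forall v : tvert n,
     ((u, v) \in E) ==> [&& (v, u) \in E & u.1 != v.1]].

Definition nedges (n : nat) (E : {set tvert n * tvert n}) : nat := #|E| %/ 2.

Definition has_K2t (t n : nat) (E : {set tvert n * tvert n}) : bool :=
  [exists a : tvert n, exists b : tvert n, exists T : {set tvert n},
     [&& a != b, #|T| == t, a \notin T, b \notin T &
         [forall x in T, ((a, x) \in E) && ((b, x) \in E)]]].

Definition ex3 (n t : nat) : nat :=
  \max_(E : {set tvert n * tvert n} | tripartite E && ~~ has_K2t t E) nedges E.

(* Main.v *)
Require Import Defs.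
From mathcomp Require Import all_boot all_order all_algebra.
From mathcomp Require Import cyclic finfield.
From mathcomp Require Import zify ring.
Set Implicit Arguments. Unset Strict Implicit. Unset Printing Implicit Defensive.
Import GRing.Theory.

Section Constr.
Local Open Scope ring_scope.
Variables (p k m : nat).
Hypothesis pP : prime p.
Hypothesis kodd : odd k.
Hypothesis pE : p = (2 * k * m).+1%N.
Local Notation F := 'F_p.
Variable g : F.
Hypothesis gP : (p.-1).-primitive_root%R g.
Local Notation n := (p * m)%N.

Lemma k_gt0 : (0 < k)%N. Proof. by case: k kodd. Qed.
Lemma m_gt0 : (0 < m)%N.
Proof. have := prime_gt1 pP; rewrite pE; case: (m) => //; by rewrite muln0. Qed.
Lemma pm1 : p.-1 = (2 * k* m)%N. Proof. by rewrite pE. Qed.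

Lemma g_neq0 : g != 0.
Proof. rewrite (prim_root_eq0 gP) pm1; have := k_gt0; have := m_gt0; lia. Qed.

Lemma fermat (x : F) : x != 0 -> x ^+ p.-1 = 1.
Proof.
move=> x0; have := expf_card x; rewrite card_Fp //.
move=> h; apply: (mulIf x0); by rewrite mul1r -exprSr prednK ?prime_gt0.
Qed.

Lemma nonsq (s w : F) : w != 0 -> s ^+ 2 != g * w ^+ 2.
Proof.
move=> w0; apply/eqP => h.
have s0 : s != 0.
  apply/eqP => s0; move: h; rewrite s0 expr0n /= => /esym/eqP.
  by rewrite mulf_eq0 (negbTE g_neq0) expf_eq0 /= (negbTE w0).
have hg : g = (s / w) ^+ 2 by rewrite expr_div_n h mulfK // expf_neq0.
have : g ^+ (k * m) = g ^+ 0.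
  rewrite hg -exprM expr0 mulnA -pm1 fermat //.
  by rewrite mulf_neq0 // invr_neq0.
move/eqP; rewrite (eq_prim_root_expr gP) pm1 mod0n.
rewrite modn_small; last by have := k_gt0; have := m_gt0; nia.
have := k_gt0; have := m_gt0; nia.
Qed.

Definition omega : F := g ^+ (2 * k).

Lemma omega_neq0 e : omega ^+ e != 0.
Proof. by rewrite expf_neq0 // expf_neq0 // g_neq0. Qed.

Lemma sq_of (v : F) e : v ^+ k = omega ^+ e -> exists2 s, s != 0 & v = s ^+ 2.
Proof.
move=> hv.
have c0 : (g ^+ e) ^+ 2 != 0 by rewrite !expf_neq0 // g_neq0.
have v0 : v != 0.
  apply/eqP=> v0; move: hv; rewrite v0 expr0n (gtn_eqF k_gt0) => /esym/eqP.
  by rewrite (negbTE (omega_neq0 e)).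
have [u uE] : exists u, u = v / (g ^+ e) ^+ 2 by eexists.
have u0 : u != 0 by rewrite uE mulf_neq0 // invr_neq0.
have uk : u ^+ k = 1.
  have h2 : ((g ^+ e) ^+ 2) ^+ k = omega ^+ e by rewrite /omega -!exprM; congr (_ ^+ _); lia.
  by rewrite uE expr_div_n hv h2 divff // omega_neq0.
exists (g ^+ e * u ^+ (k.+1)./2).
  by rewrite mulf_neq0 // ?expf_neq0 // g_neq0.
have hk : (((k.+1)./2) * 2 = k.+1)%N by rewrite muln2 even_halfK //= kodd.
by rewrite exprMn -[(u ^+ _) ^+ 2]exprM hk [u ^+ k.+1]exprS uk mulr1 uE mulrC divfK.
Qed.

Lemma omega_inj a i j : (i < m)%N -> (j < m)%N -> omega ^+ (a + i) = omega ^+ (a + j) -> i = j.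
Proof.
move=> im jm /eqP; rewrite /omega -!exprM (eq_prim_root_expr gP) pm1.
rewrite -!muln_modr eqn_pmul2l; last by have := k_gt0; lia.
by rewrite eqn_modDl !modn_small // => /eqP.
Qed.

Definition lam (X Y : 'I_3) : F := if ((X.+1 %% 3)%N == Y) then 1 else g.

Lemma lam_pair (X Y Z : 'I_3) : X != Y -> X != Z -> Y != Z ->
  (lam X Y = 1 /\ lam X Z = g) \/ (lam X Y = g /\ lam X Z = 1).
Proof.
rewrite /lam.
by move: X Y Z => [[|[|[|x]]] Hx] [[|[|[|y]]] Hy] [[|[|[|z]]] Hz] //=; auto.
Qed.

Lemma third (X Y Z Z' : 'I_3) : X != Z -> X != Z' -> Z != Z' -> Y != Z -> Y != Z' -> X = Y.
Proof.
move: X Y Z Z' => [[|[|[|x]]] Hx] [[|[|[|y]]] Hy] [[|[|[|z]]] Hz] [[|[|[|z']]] Hz'] //=;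
  by move=> *; apply: val_inj.
Qed.

Lemma lam_neq0 X Y : lam X Y != 0.
Proof. by rewrite /lam; case: ifP => _; rewrite ?oner_neq0 ?g_neq0. Qed.

Lemma lam_nosq (X Y Z : 'I_3) s s' : X != Y -> X != Z -> Y != Z -> s != 0 -> s' != 0 ->
  lam X Y * s ^+ 2 != lam X Z * s' ^+ 2.
Proof.
move=> XY XZ YZ s0 s'0; case: (lam_pair XY XZ YZ) => [[-> ->]|[-> ->]].
  by rewrite mul1r nonsq.
by rewrite mul1r eq_sym nonsq.
Qed.

Definition xc (u : tvert n) : F := ((u.2 %% p)%N)%:R.
Definition ic (u : tvert n) : nat := (u.2 %/ p)%N.
Definition vv (u w : tvert n) : F := lam u.1 w.1 * xc u + lam w.1 u.1 * xc w.
Definition adj (u w : tvert n) : bool :=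
  (u.1 != w.1) && (vv u w ^+ k == omega ^+ (ic u + ic w)%N).
Definition Eg : {set tvert n * tvert n} := [set e | adj e.1 e.2].

Lemma ic_lt u : (ic u < m)%N.
Proof. rewrite /ic ltn_divLR ?prime_gt0 //; have := ltn_ord u.2; lia. Qed.

Lemma vert_eq (u w : tvert n) : u.1 = w.1 -> xc u = xc w -> ic u = ic w -> u = w.
Proof.
case: u w => [X u] [Y w] /= -> /(congr1 (fun z : F => nat_of_ord z)); rewrite /xc /= !val_Fp_nat // !modn_mod /ic => h1 h2.
by congr pair; apply: val_inj; rewrite /= (divn_eq u p) (divn_eq w p) h1 h2.
Qed.

Lemma adjC u w : adj u w = adj w u.
Proof. by rewrite /adj eq_sym /vv addrC addnC. Qed.

Lemma vv_sq u w : adj u w -> exists2 s, s != 0 & vv u w = s ^+ 2.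
Proof. by case/andP=> _ /eqP /sq_of. Qed.

Lemma K2t_free : ~~ has_K2t k.+1 Eg.
Proof.
apply/existsP => [[a /existsP [b /existsP [T /and5P [ab /eqP cT _ _ /forallP hT]]]]].
have hc c : c \in T -> adj a c /\ adj b c.
  by move=> cTT; move: (hT c); rewrite cTT /= !inE => /andP[].
pose f c := vv a c / vv b c.
pose P : {poly F} := 'X^k - (omega ^+ ic a / omega ^+ ic b)%:P.
have P0 : P != 0 by rewrite -size_poly_eq0 size_XnsubC // k_gt0.
have rt : all (root P) (map f (enum T)).
  apply/allP => r /mapP [c]; rewrite mem_enum => cTT ->.
  have [/andP[_ /eqP h1] /andP[_ /eqP h2]] := hc c cTT.
  rewrite /root /P !hornerE subr_eq0 /f expr_div_n h1 h2 !exprD.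
  rewrite invfM mulrACA divff ?mulr1 //; exact: omega_neq0.
have un : uniq (map f (enum T)).
  rewrite map_inj_in_uniq ?enum_uniq // => c c'; rewrite !mem_enum => cTT c'T fe.
  have [ac bc] := hc c cTT; have [ac' bc'] := hc c' c'T.
  have [sv sv0 svE] := vv_sq ac; have [sw sw0 swE] := vv_sq bc.
  have [sv' sv'0 sv'E] := vv_sq ac'; have [sw' sw'0 sw'E] := vv_sq bc'.
  have w0 : vv b c != 0 by rewrite swE expf_neq0.
  have w'0 : vv b c' != 0 by rewrite sw'E expf_neq0.
  move/eqP: fe; rewrite /f eqr_div // => /eqP cross.
  case/andP: ac => aZ /eqP hv; case/andP: bc => bZ /eqP hw.
  case/andP: ac' => aZ' /eqP hv'; case/andP: bc' => bZ' /eqP hw'.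
  have abne : forall l, a.1 = b.1 -> xc a = xc b -> omega ^+ (ic a + l) = omega ^+ (ic b + l) -> False.
    move=> l e1 e2 e3; move/eqP: ab; apply; apply: vert_eq => //.
    by apply: (@omega_inj l); rewrite ?ic_lt // addnC e3 addnC.
  case: (eqVneq c.1 c'.1) => [Zeq | Zne].
    have xz : xc c = xc c'.
      case: (eqVneq (xc c) (xc c')) => // hne; exfalso.
      have key : (xc c - xc c') * (lam c.1 a.1 * vv b c' - lam c.1 b.1 * vv a c') = vv a c * vv b c' - vv a c' * vv b c.
        by rewrite /vv -Zeq; ring.
      rewrite cross subrr in key.
      move/eqP: key; rewrite mulf_eq0 subr_eq0 (negbTE hne) /= subr_eq0 => /eqP key.
      case: (eqVneq a.1 b.1) => [ab1 | abn].
        move: key; rewrite -ab1 => /(mulfI (lam_neq0 _ _)) key.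
        apply: (abne (ic c') ab1); last by rewrite -hv' -hw' key.
        by move: key; rewrite /vv -ab1 => /addIr /(mulfI (lam_neq0 _ _)) ->.
      move: key; rewrite sw'E sv'E => /eqP; apply/negP; apply: lam_nosq => //.
        by rewrite eq_sym Zeq. by rewrite eq_sym Zeq.
    apply: vert_eq => //.
    apply: (@omega_inj (ic a)); rewrite ?ic_lt // -hv -hv' /vv Zeq xz //.
  exfalso.
  have ab1 : a.1 = b.1 by apply: (third aZ aZ' Zne bZ bZ').
  have key : (xc a - xc b) * (lam a.1 c.1 * vv b c' - lam a.1 c'.1 * vv b c) = vv a c * vv b c' - vv a c' * vv b c.
    by rewrite /vv -ab1; ring.
  rewrite cross subrr in key.
  move/eqP: key; rewrite mulf_eq0 !subr_eq0 => /orP [/eqP xab | /eqP key].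
    apply: (abne (ic c) ab1 xab); rewrite -hv -hw /vv -ab1 xab //.
  move: key; rewrite sw'E swE => /eqP; apply/negP; apply: lam_nosq => //.
have := max_poly_roots P0 rt un.
by rewrite size_map -cardE cT size_XnsubC ?k_gt0 // ltnn.
Qed.

Lemma trip : tripartite Eg.
Proof.
apply/forallP => u; apply/forallP => w; apply/implyP; rewrite !inE /= => h.
by rewrite adjC h /=; case/andP: h.
Qed.

Definition nxt (X : 'I_3) (s : bool) : 'I_3 := inord ((X + (if s then 1 else 2)) %% 3)%N.

Lemma nxt_neq X s : X != nxt X s.
Proof.
apply/negP => /eqP /(congr1 (fun z : 'I_3 => nat_of_ord z)); rewrite /nxt inordK; last by rewrite ltn_mod.
by move: X s => [[|[|[|x]]] Hx] [].
Qed.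

Lemma nxt_inj X s s' : nxt X s = nxt X s' -> s = s'.
Proof.
move/(congr1 (fun z : 'I_3 => nat_of_ord z)); rewrite /nxt !inordK ?ltn_mod //.
by move: X s s' => [[|[|[|x]]] Hx] [] [].
Qed.

Lemma split_idx y j : (y < p)%N -> ((y + j * p) %% p = y /\ (y + j * p) %/ p = j)%N.
Proof.
move=> yp; split; first by rewrite addnC modnMDl modn_small.
by rewrite divnDMl ?prime_gt0 // divn_small.
Qed.

Lemma Fp_lt (z : F) : (nat_of_ord z < p)%N.
Proof. by have := ltn_ord z; rewrite [X in (_ < X)%N -> _]Fp_cast. Qed.

Definition yv (a : tvert n) (s : bool) (j q : nat) : F :=
  (g ^+ (2 * (ic a + j) + 2 * m * q) - lam a.1 (nxt a.1 s) * xc a) / lam (nxt a.1 s) a.1.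

Definition bidx (a : tvert n) (s : bool) (j q : nat) : 'I_n :=
  insubd a.2 (nat_of_ord (yv a s j q) + j * p)%N.

Lemma bidx_val a s (j : 'I_m) q : nat_of_ord (bidx a s j q) = (nat_of_ord (yv a s j q) + j * p)%N.
Proof.
rewrite /bidx val_insubd; case: ifP => // /negP; case.
have := Fp_lt (yv a s j q); have := ltn_ord j; nia.
Qed.

Definition hmap (d : tvert n * bool * 'I_m * 'I_k) : tvert n * tvert n :=
  let: (a, s, j, q) := d in (a, (nxt a.1 s, bidx a s j q)).

Lemma hmap_adj d : adj (hmap d).1 (hmap d).2.
Proof.
case: d => [[[a s] j] q] /=; rewrite /adj /= nxt_neq /=.
have [e1 e2] := split_idx j (Fp_lt (yv a s j q)).
have hx : xc (nxt a.1 s, bidx a s j q) = yv a s j q.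
  by rewrite /xc /= bidx_val e1 natr_Zp.
have hi : ic (nxt a.1 s, bidx a s j q) = j by rewrite /ic /= bidx_val e2.
rewrite /vv /= hx hi /yv [X in _ + X]mulrC divfK ?lam_neq0 // addrC subrK.
rewrite -exprM mulnDl exprD /omega -exprM mulnC.
have -> : (2 * m * q * k)%N = (p.-1 * q)%N by rewrite pm1; ring.
rewrite [g ^+ (p.-1 * q)]exprM (prim_expr_order gP) expr1n mulr1; apply/eqP; congr (_ ^+ _); lia.
Qed.

Lemma hmap_inj : injective hmap.
Proof.
move=> [[[a s] j] q] [[[a' s'] j'] q'] /= [<-] /(nxt_inj) <- h.
have h1 := congr1 (fun z : 'I_n => nat_of_ord z) h; move: h1 => /=.
rewrite !bidx_val => h1.
have [e1 e2] := split_idx j (Fp_lt (yv a s j q)).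
have [e1' e2'] := split_idx j' (Fp_lt (yv a s j' q')).
have ejj : j = j' by apply: val_inj; rewrite /= -e2 h1 e2'.
subst j'; have eyy : yv a s j q = yv a s j q'.
  by apply: ord_inj; rewrite -e1 h1 e1'.
move: eyy; rewrite /yv => /(mulIf (invr_neq0 (lam_neq0 _ _))) /addIr /eqP.
rewrite (eq_prim_root_expr gP) eqn_modDl pm1.
have -> : (2 * k * m = 2 * m * k)%N by ring.
rewrite -!muln_modr eqn_pmul2l; last by have := m_gt0; lia.
by rewrite !modn_small // => /eqP eq; congr (_, _); apply: val_inj.
Qed.

Lemma card_Eg : (3 * n * 2 * m * k <= #|Eg|)%N.
Proof.
have -> : (3 * n * 2 * m * k)%N = #|[set hmap d | d in {: tvert n * bool * 'I_m * 'I_k}]|.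
  by rewrite card_imset; [rewrite !card_prod !card_ord card_bool | exact: hmap_inj].
apply: subset_leq_card; apply/subsetP => e /imsetP [d _ ->]; rewrite inE; exact: hmap_adj.
Qed.

End Constr.

Theorem theorem2 (t p : nat) :
  2 <= t -> ~~ odd t -> prime p -> 3 <= p -> p = 1 %[mod t.-1] ->
  3 * p * (p.-1) ^ 2 <=
    4 * t.-1 * ex3 (p * p.-1 %/ (2 * t.-1)) t.
Proof.
move=> t2 teven pP p3 pmod.
set k := t.-1.
have tE : t = k.+1 by rewrite /k; lia.
have kodd : odd k by move: teven; rewrite tE /= negbK.
have k0 : 0 < k by case: (k) kodd.
have dk : k %| p - 1 by rewrite -eqn_mod_dvd ?prime_gt0 //; apply/eqP.
have d2 : 2 %| p - 1.
  case: (even_prime pP) => [p2|podd]; first by rewrite p2 in p3.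
  move: podd; rewrite dvdn2 subn1; case: (p) p3 => // q _ /=; by rewrite negbK.
have d2k : 2 * k %| p - 1 by rewrite Gauss_dvd ?coprime2n // d2 dk.
set m := (p - 1) %/ (2 * k).
have pE : p = (2 * k * m).+1.
  by rewrite /m mulnC divnK //; have := prime_gt0 pP; lia.
have [g gP] : exists g : 'F_p, (p.-1).-primitive_root%R g.
  have : has (p.-1).-primitive_root%R (enum (predC1 (0%R : 'F_p))).
    apply: has_prim_root; first by lia.
    - apply/allP => x; rewrite mem_enum => x0; rewrite unity_rootE; apply/eqP.
      exact: fermat.
    - exact: enum_uniq.
    - by rewrite -cardE cardC1 card_Fp.
  by case/hasP => g _ gP; exists g.
have nE : p * p.-1 %/ (2 * t.-1) = p * m.
  rewrite -/k (_ : p.-1 = 2 * k * m); last by rewrite {1}pE.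
  by rewrite (_ : p * (2 * k * m) = p * m * (2 * k)) ?mulnK //; [lia | ring].
rewrite nE.
have hb := @leq_bigmax_cond _ (fun E => tripartite E && ~~ has_K2t t E) (@nedges (p * m)) (Eg k m g).
have := hb; rewrite trip tE (K2t_free pP kodd pE gP) => /(_ isT) hE.
have hc := card_Eg pP kodd pE gP.
rewrite /ex3; move: hE hc; rewrite /nedges.
set X := \max_(_ | _) _; set Y := #|Eg k m g|.
rewrite (_ : p.-1 = 2 * k * m); last by rewrite {1}pE.
move=> h1 h2.
have h3 : 3 * (p * m) * m * k <= Y %/ 2.
  move: h2; have -> : 3 * (p * m) * 2 * m * k = (3 * (p * m) * m * k) * 2 by ring.
  by move=> h; rewrite leq_divRL.
rewrite (_ : 3 * p * (2 * k * m) ^ 2 = 4 * k * (3 * (p * m) * m * k)); last by ring.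
by apply: leq_mul => //; exact: leq_trans h3 h1.
Qed.
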